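(* Consider the two-species chemostat $$\dot s=-\mu_1(s)b_1-\mu_2(s)b_2+D(s_\mathrm{in}-s),\qquad \dot b_i=\mu_i(s)b_i-Db_i\quad(i=1,2),$$ with $s_\mathrm{in}>0$ and continuously differentiable growth functions $\mu_1,\mu_2:[0,s_\mathrm{in}]\to[0,\infty)$. Fix $\bar s\in(0,s_\mathrm{in})$ with $\mu_1(\bar s)<\mu_2(\bar s)$, and constants $0<D_{\min}<\mu_2(\bar s)<D_{\max}$. Use the dynamic feedback $$D=\operatorname{sat}_{[D_{\min},D_{\max}]}\big(\bar D-G_1(s-\bar s)\big),\qquad \frac{d}{dt}\bar D=-G_2(s-\bar s)(\bar D-D_{\min})(D_{\max}-\bar D).$$ Then for any constants $G_1>0$, $G_2>0$ with $G_1>-\mu_2'(\bar s)$, the equilibrium $(s,b_1,b_2,\bar D)=(\bar s,0,s_\mathrm{in}-\bar s,\mu_2(\bar s))$ of the closed-loop system is locally exponentially stable, and for solutions starting sufficiently close to it, $\lim_{t\to\infty}\bar D(t)=\mu_2(\bar s)$.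
   Context: The saturation function is $\operatorname{sat}_{[D_{\min},D_{\max}]}(x)=D_{\max}$ if $x>D_{\max}$, $=x$ if $x\in[D_{\min},D_{\max}]$, $=D_{\min}$ if $x<D_{\min}$. *)

(* Defs.v *)
From Stdlib Require Import Reals.
Open Scope R_scope.

Definition sat (Dmin Dmax x : R) : R :=
  if Rlt_dec Dmax x then Dmax else if Rlt_dec x Dmin then Dmin else x.

Definition rcont0 (f : R -> R) : Prop :=
  forall eps, 0 < eps -> exists d, 0 < d /\
    forall t, 0 <= t < d -> Rabs (f t - f 0) < eps.

Definition closed_loop_solution (mu1 mu2 : R -> R) (sin sbar Dmin Dmax G1 G2 : R)
    (s b1 b2 Db : R -> R) : Prop :=
  (forall t, 0 < t ->
     let D := sat Dmin Dmax (Db t - G1 * (s t - sbar)) in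
     derivable_pt_lim s t (- mu1 (s t) * b1 t - mu2 (s t) * b2 t + D * (sin - s t)) /\
     derivable_pt_lim b1 t (mu1 (s t) * b1 t - D * b1 t) /\
     derivable_pt_lim b2 t (mu2 (s t) * b2 t - D * b2 t) /\
     derivable_pt_lim Db t (- G2 * (s t - sbar) * (Db t - Dmin) * (Dmax - Db t)))
  /\ rcont0 s /\ rcont0 b1 /\ rcont0 b2 /\ rcont0 Db.

Definition dist4 (s b1 b2 Db s0 b10 b20 Db0 : R) : R :=
  Rmax (Rmax (Rabs (s - s0)) (Rabs (b1 - b10)))
       (Rmax (Rabs (b2 - b20)) (Rabs (Db - Db0))).

(* Main.v *)
Require Import Defs.
From Stdlib Require Import Reals Lra Psatz Classical.
From Coquelicot Require Import Coquelicot.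
Open Scope R_scope.

Lemma cont_eps (g : R -> R) x : continuity_pt g x ->
  forall eps, 0 < eps -> exists d, 0 < d /\ forall y, Rabs (y - x) < d -> Rabs (g y - g x) < eps.
Proof.
  intros H eps He.
  destruct (H eps He) as [d [Hd H']].
  exists d; split; [lra|]. intros y Hy.
  destruct (Req_dec y x) as [->|Hne].
  - rewrite Rminus_eq_0, Rabs_R0; lra.
  - apply (H' y). split; [split; [exact I| congruence] | exact Hy].
Qed.

Lemma rcont0_mul (f g : R -> R) : rcont0 f -> continuity_pt g 0 -> rcont0 (fun t => f t * g t).
Proof.
  intros Hf Hg eps He.
  set (C := Rabs (f 0) + Rabs (g 0) + 1).
  assert (HCd : C = Rabs (f 0) + Rabs (g 0) + 1) by reflexivity. clearbody C.
  assert (HC : 0 < C) by (pose proof (Rabs_pos (f 0)); pose proof (Rabs_pos (g 0)); lra).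
  set (e1 := Rmin 1 (eps / (2 * C))).
  assert (He1 : 0 < e1) by (unfold e1; apply Rmin_glb_lt; [lra| apply Rdiv_lt_0_compat; lra]).
  destruct (Hf e1 He1) as [d1 [Hd1 H1]].
  destruct (cont_eps g 0 Hg e1 He1) as [d2 [Hd2 H2]].
  exists (Rmin d1 d2); split; [apply Rmin_glb_lt; lra|].
  intros t [Ht0 Ht].
  assert (Ha : Rabs (f t - f 0) < e1) by (apply H1; split; [lra| eapply Rlt_le_trans; [exact Ht| apply Rmin_l]]).
  assert (Hb : Rabs (g t - g 0) < e1) by (apply H2; rewrite Rminus_0_r, Rabs_right by lra; eapply Rlt_le_trans; [exact Ht| apply Rmin_r]).
  assert (He1a : e1 <= 1) by apply Rmin_l.
  assert (He1b : e1 <= eps / (2 * C)) by apply Rmin_r.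
  assert (E : f t * g t - f 0 * g 0 = (f t - f 0) * g t + f 0 * (g t - g 0)) by ring.
  rewrite E.
  eapply Rle_lt_trans; [apply Rabs_triang|].
  rewrite !Rabs_mult.
  assert (Hgt : Rabs (g t) <= Rabs (g 0) + 1).
  { replace (g t) with ((g t - g 0) + g 0) by ring.
    eapply Rle_trans; [apply Rabs_triang|]. lra. }
  pose proof (Rabs_pos (f 0)). pose proof (Rabs_pos (g 0)).
  assert (P1 : Rabs (f t - f 0) * Rabs (g t) <= e1 * C).
  { apply Rmult_le_compat; try apply Rabs_pos; lra. }
  assert (P2 : Rabs (f 0) * Rabs (g t - g 0) <= C * e1).
  { apply Rmult_le_compat; try apply Rabs_pos; lra. }
  assert (P3 : e1 * C <= eps / 2).
  { apply Rmult_le_compat_r with (r := C) in He1b; [|lra].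
    replace (eps / (2 * C) * C) with (eps / 2) in He1b by (field; lra). lra. }
  assert (Rabs (f t - f 0) * Rabs (g t) < e1 * C \/ Rabs (f t - f 0) * Rabs (g t) <= e1 * C) by lra.
  assert (Rabs (f t - f 0) * Rabs (g t) < e1 * C).
  { destruct (Req_dec (Rabs (g t)) 0) as [Z|Z].
    - rewrite Z, Rmult_0_r. nra.
    - apply Rle_lt_trans with (Rabs (f t - f 0) * C).
      + apply Rmult_le_compat_l; [apply Rabs_pos| lra].
      + apply Rmult_lt_compat_r; lra. }
  lra.
Qed.

Lemma mvt_le (f df : R -> R) a b : a < b ->
  (forall c, a < c < b -> derivable_pt_lim f c (df c)) ->
  (forall c, a <= c <= b -> continuity_pt f c) ->
  (forall c, a < c < b -> df c <= 0) -> f b <= f a.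
Proof.
  intros Hab Hd Hc Hn.
  assert (pr1 : forall c, a < c < b -> derivable_pt f c).
  { intros c Hc'. exists (df c). apply Hd. exact Hc'. }
  assert (pr2 : forall c, a < c < b -> derivable_pt id c) by (intros; apply derivable_pt_id).
  destruct (MVT f id a b pr1 pr2 Hab Hc) as [c [P E]].
  { intros; apply derivable_continuous_pt, derivable_pt_id. }
  rewrite (derive_pt_eq_0 f c (df c) (pr1 c P) (Hd c P)) in E.
  rewrite (derive_pt_eq_0 id c 1 (pr2 c P) (derivable_pt_lim_id c)) in E.
  unfold id in E. pose proof (Hn c P). nra.
Qed.

Lemma decay (U U' : R -> R) (lam T : R) :
  0 < T ->
  (forall t, 0 < t -> derivable_pt_lim U t (U' t)) ->
  rcont0 U ->
  (forall t, 0 < t < T -> U' t <= - lam * U t) ->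
  U T <= U 0 * exp (- lam * T).
Proof.
  intros HT Hder H0 Hd.
  set (g := fun t => U t * exp (lam * t)).
  set (dg := fun t => U' t * exp (lam * t) + U t * (exp (lam * t) * lam)).
  assert (Hexp : forall t, derivable_pt_lim (fun t => exp (lam * t)) t (exp (lam * t) * lam)).
  { intros t. apply is_derive_Reals. auto_derive; [exact I| ring]. }
  assert (Hgd : forall t, 0 < t -> derivable_pt_lim g t (dg t)).
  { intros t Ht. unfold g, dg.
    apply (derivable_pt_lim_mult U (fun t => exp (lam * t))); auto. }
  assert (Hmono : forall a, 0 < a < T -> g T <= g a).
  { intros a Ha. apply (mvt_le g dg a T); try lra.
    - intros c Hc. apply Hgd. lra.
    - intros c Hc. apply derivable_continuous_pt. exists (dg c). apply Hgd. lra.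
    - intros c Hc. unfold dg. pose proof (Hd c ltac:(lra)). pose proof (exp_pos (lam * c)). nra. }
  assert (Hg0 : rcont0 g).
  { apply rcont0_mul; auto. apply derivable_continuous_pt. exists (exp (lam * 0) * lam). apply Hexp. }
  assert (HgT : g T <= g 0).
  { apply Rnot_lt_le. intro Hlt.
    destruct (Hg0 (g T - g 0) ltac:(lra)) as [d [Hd0 Hd1]].
    set (a := Rmin (d / 2) (T / 2)).
    assert (Ha1 : a <= d / 2) by apply Rmin_l.
    assert (Ha2 : a <= T / 2) by apply Rmin_r.
    assert (Ha0 : 0 < a) by (unfold a; apply Rmin_glb_lt; lra).
    pose proof (Hd1 a ltac:(lra)). pose proof (Hmono a ltac:(lra)).
    apply Rabs_def2 in H. lra. }
  unfold g in HgT. rewrite Rmult_0_r, exp_0, Rmult_1_r in HgT.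
  replace (U T) with (U T * exp (lam * T) * exp (- lam * T)).
  - apply Rmult_le_compat_r; [left; apply exp_pos| exact HgT].
  - rewrite Rmult_assoc, <- exp_plus. replace (lam * T + - lam * T) with 0 by ring.
    rewrite exp_0; ring.
Qed.

Lemma bootstrap (U U' : R -> R) (lam th : R) :
  0 <= lam -> 0 <= U 0 -> U 0 < th ->
  (forall t, 0 < t -> derivable_pt_lim U t (U' t)) ->
  rcont0 U ->
  (forall t, 0 < t -> U t < th -> U' t <= - lam * U t) ->
  forall t, 0 <= t -> U t <= U 0 * exp (- lam * t).
Proof.
  intros Hlam HU0 HU0th Hder H0 Hb.
  assert (Hcont : forall t, 0 < t -> continuity_pt U t).
  { intros t Ht. apply derivable_continuous_pt. exists (U' t). apply Hder; exact Ht. }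
  assert (Hexp1 : forall t, 0 <= t -> exp (- lam * t) <= 1).
  { intros t Ht. rewrite <- exp_0. destruct (Req_dec (lam * t) 0) as [Z|Z].
    - replace (- lam * t) with 0 by lra. lra.
    - left. apply exp_increasing. nra. }
  assert (Hdec : forall T, 0 < T -> (forall t, 0 < t < T -> U t < th) -> U T <= U 0 * exp (- lam * T)).
  { intros T HT Hin. apply decay with (U' := U'); auto.
    intros t Ht. apply Hb; [lra| apply Hin; lra]. }
  assert (Hall : forall t, 0 <= t -> U t < th).
  { destruct (classic (exists t, 0 <= t /\ th <= U t)) as [[t1 [Ht1 Ht1']]|Hno].
    2:{ intros t Ht. apply Rnot_le_lt. intro. apply Hno. exists t. split; assumption. }
    exfalso.
    set (E := fun r => exists t, r = - t /\ 0 <= t /\ th <= U t).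
    assert (Hbd : bound E).
    { exists 0. intros r [t [-> [Ht _]]]. lra. }
    destruct (completeness E Hbd (ex_intro _ (- t1) (ex_intro _ t1 (conj eq_refl (conj Ht1 Ht1'))))) as [m [Hub Hlub]].
    set (ts := - m).
    assert (Hlow : forall t, 0 <= t -> th <= U t -> ts <= t).
    { intros t Ht Ht'. assert (- t <= m) by (apply Hub; exists t; auto). unfold ts; lra. }
    assert (Hgreat : forall L, (forall t, 0 <= t -> th <= U t -> L <= t) -> L <= ts).
    { intros L HL. assert (m <= - L).
      { apply Hlub. intros r [t [-> [Ht Ht']]]. pose proof (HL t Ht Ht'). lra. }
      unfold ts; lra. }
    destruct (H0 (th - U 0) ltac:(lra)) as [d [Hd Hd']].
    assert (Hts : d <= ts).
    { apply Hgreat. intros t Ht Ht'. apply Rnot_lt_le. intro Hlt.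
      pose proof (Hd' t ltac:(lra)). apply Rabs_def2 in H. lra. }
    assert (Hbefore : forall t, 0 <= t < ts -> U t < th).
    { intros t Ht. apply Rnot_le_lt. intro. pose proof (Hlow t ltac:(lra) H). lra. }
    assert (Hat : th <= U ts).
    { apply Rnot_lt_le. intro Hlt.
      destruct (cont_eps U ts (Hcont ts ltac:(lra)) (th - U ts) ltac:(lra)) as [de [Hde Hde']].
      assert (ts + de / 2 <= ts).
      { apply Hgreat. intros t Ht Ht'. apply Rnot_lt_le. intro Hlt2.
        destruct (Rlt_or_le t ts) as [Hl|Hl].
        - pose proof (Hbefore t ltac:(lra)). lra.
        - assert (Rabs (t - ts) < de) by (rewrite Rabs_right; lra).
          pose proof (Hde' t H). apply Rabs_def2 in H1. lra. }
      lra. }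
    pose proof (Hdec ts ltac:(lra) ltac:(intros t Ht; apply Hbefore; lra)).
    pose proof (Hexp1 ts ltac:(lra)).
    assert (U 0 * exp (- lam * ts) <= U 0) by nra.
    lra. }
  intros t Ht. destruct (Rle_lt_or_eq_dec _ _ Ht) as [Hp|<-].
  - apply Hdec; auto. intros; apply Hall; lra.
  - rewrite Rmult_0_r, exp_0. lra.
Qed.

Lemma abs_prod_le a b A Bb : Rabs a <= A -> Rabs b <= Bb -> a * b <= A * Bb.
Proof.
  intros Ha Hb. pose proof (Rabs_pos a). pose proof (Rabs_pos b).
  apply Rle_trans with (Rabs (a * b)); [apply Rle_abs|]. rewrite Rabs_mult.
  apply Rmult_le_compat; auto.
Qed.

Lemma abs_sub_le a b : Rabs (a - b) <= Rabs a + Rabs b.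
Proof. unfold Rminus. eapply Rle_trans; [apply Rabs_triang| rewrite Rabs_Ropp; lra]. Qed.

Lemma sqabs r : r ^ 2 = Rabs r ^ 2.
Proof. rewrite RPow_abs, Rabs_right; [reflexivity| apply Rle_ge, pow2_ge_0]. Qed.

Lemma key_ez (B a G2 p q g c0 eta rho Mb e z x y m1 m2 h : R) :
  0 < B -> 0 < a -> 0 < G2 -> 0 < p -> 0 < q -> 0 < g ->
  g * (2 * (G2 * (p * q)) + B * a ^ 2) <= G2 * (p * q) * B * a ->
  0 < c0 -> c0 <= G2 * (p * q) * B * a -> c0 <= g * B ->
  0 <= eta -> 0 <= rho -> 0 <= Mb ->
  Rabs h <= eta * Rabs e -> Rabs e <= rho -> Rabs z <= rho ->
  Rabs m1 <= Mb -> Rabs m2 <= Mb ->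
  4 * (G2 * (p * q) + g) * (rho * (1 + a + eta) + B * eta)
   + 4 * (B + g) * (G2 * (Rabs (q - p) + rho) * rho) <= c0 / 4 ->
  2 * (G2 * (p * q) * e - g * z) * (- m1 * y - m2 * (x - y) + (z - a * e - h) * (B - e))
  + 2 * (B * z - g * e) * (- G2 * e * (z + p) * (q - z))
  <= - (c0 / 2) * (e ^ 2 + z ^ 2)
     + (8 * (G2 * (p * q) + g) ^ 2 / c0) * (5 * Mb ^ 2) * (x ^ 2 + y ^ 2).
Proof.
  intros HB Ha HG2 Hp Hq Hg Hg1 Hc0 Hc1 Hc2 Heta Hrho HMb Hh He Hz Hm1 Hm2 Hsmall.
  set (al := G2 * (p * q)).
  assert (Hal : 0 < al) by (unfold al; apply Rmult_lt_0_compat; nra).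
  set (A := al + g). set (A' := B + g).
  set (k1 := rho * (1 + a + eta) + B * eta).
  set (k2 := G2 * (Rabs (q - p) + rho) * rho).
  set (Q := - m1 * y - m2 * (x - y)).
  set (u := Rabs e + Rabs z).
  pose proof (Rabs_pos e). pose proof (Rabs_pos z). pose proof (Rabs_pos h).
  pose proof (Rabs_pos (q - p)).
  assert (Lin : 2 * (al * e - g * z) * (B * (z - a * e)) + 2 * (B * z - g * e) * (- al * e)
                <= - c0 * (e ^ 2 + z ^ 2)).
  { assert (Hsq : 0 <= g * B * (z - a * e) ^ 2) by (apply Rmult_le_pos; [nra| apply pow2_ge_0]).
    assert (E2 : 0 <= e ^ 2) by apply pow2_ge_0. assert (Z2 : 0 <= z ^ 2) by apply pow2_ge_0.
    assert (HL1 : (- 2 * al * B * a + 2 * al * g + g * B * a ^ 2) * e ^ 2 <= - al * B * a * e ^ 2).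
    { apply Rmult_le_compat_r; [exact E2|]. unfold al in *. nra. }
    assert (HL2 : - (G2 * (p * q) * B * a) * e ^ 2 <= - c0 * e ^ 2) by nra.
    assert (HL3 : - (g * B) * z ^ 2 <= - c0 * z ^ 2) by nra.
    unfold al in *. nra. }
  assert (HR1 : Rabs (- e * (z - a * e - h) - B * h) <= k1 * Rabs e).
  { eapply Rle_trans; [apply Rabs_triang|]. rewrite Rabs_Ropp, !Rabs_mult, Rabs_Ropp.
    rewrite (Rabs_right B) by lra.
    assert (Hzz : Rabs (z - a * e - h) <= rho * (1 + a + eta)).
    { unfold Rminus. eapply Rle_trans; [apply Rabs_triang|].
      eapply Rle_trans; [apply Rplus_le_compat_r; apply Rabs_triang|].
      rewrite !Rabs_Ropp, Rabs_mult, (Rabs_right a) by lra. nra. }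
    unfold k1. nra. }
  assert (HQ : Rabs Q <= Mb * (Rabs x + 2 * Rabs y)).
  { unfold Q. unfold Rminus. eapply Rle_trans; [apply Rabs_triang|].
    rewrite Rabs_Ropp, !Rabs_mult, Rabs_Ropp.
    assert (Hxy : Rabs (x + - y) <= Rabs x + Rabs y) by (eapply Rle_trans; [apply Rabs_triang| rewrite Rabs_Ropp; lra]).
    pose proof (Rabs_pos y). pose proof (Rabs_pos x). pose proof (Rabs_pos m1). pose proof (Rabs_pos m2).
    nra. }
  assert (HQ2 : Q ^ 2 <= 5 * Mb ^ 2 * (x ^ 2 + y ^ 2)).
  { rewrite (sqabs Q), (sqabs x), (sqabs y).
    pose proof (Rabs_pos Q). pose proof (Rabs_pos y). pose proof (Rabs_pos x).
    assert (HQa : Rabs Q ^ 2 <= (Mb * (Rabs x + 2 * Rabs y)) ^ 2) by (apply pow_incr; lra).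
    assert (HQb : (Rabs x + 2 * Rabs y) ^ 2 <= 5 * (Rabs x ^ 2 + Rabs y ^ 2)).
    { pose proof (pow2_ge_0 (2 * Rabs x - Rabs y)). nra. }
    assert (HQc : Mb ^ 2 * (Rabs x + 2 * Rabs y) ^ 2 <= Mb ^ 2 * (5 * (Rabs x ^ 2 + Rabs y ^ 2)))
      by (apply Rmult_le_compat_l; [apply pow2_ge_0| exact HQb]).
    replace ((Mb * (Rabs x + 2 * Rabs y)) ^ 2) with (Mb ^ 2 * (Rabs x + 2 * Rabs y) ^ 2) in HQa by ring.
    lra. }
  assert (HR2 : Rabs (- G2 * e * (z + p) * (q - z) + al * e) <= k2 * Rabs e).
  { replace (- G2 * e * (z + p) * (q - z) + al * e) with (- G2 * e * (z * (q - p) - z * z)) by (unfold al; ring).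
    rewrite !Rabs_mult, Rabs_Ropp, (Rabs_right G2) by lra.
    assert (Hzq : Rabs (z * (q - p) - z * z) <= (Rabs (q - p) + rho) * rho).
    { eapply Rle_trans; [apply abs_sub_le|]. rewrite !Rabs_mult.
      assert (Rabs z * Rabs (q - p) <= rho * Rabs (q - p)) by (apply Rmult_le_compat_r; lra).
      assert (Rabs z * Rabs z <= rho * rho) by (apply Rmult_le_compat; lra).
      lra. }
    assert (Rabs e * Rabs (z * (q - p) - z * z) <= Rabs e * ((Rabs (q - p) + rho) * rho))
      by (apply Rmult_le_compat_l; lra).
    unfold k2. nra. }
  assert (Hw1 : Rabs (al * e - g * z) <= A * u).
  { unfold Rminus. eapply Rle_trans; [apply Rabs_triang|]. rewrite Rabs_Ropp, !Rabs_mult.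
    rewrite (Rabs_right al), (Rabs_right g) by lra. unfold A, u. nra. }
  assert (Hw2 : Rabs (B * z - g * e) <= A' * u).
  { unfold Rminus. eapply Rle_trans; [apply Rabs_triang|]. rewrite Rabs_Ropp, !Rabs_mult.
    rewrite (Rabs_right B), (Rabs_right g) by lra. unfold A', u. nra. }
  assert (Hu2 : u ^ 2 <= 2 * (e ^ 2 + z ^ 2)).
  { unfold u. rewrite (sqabs e), (sqabs z). pose proof (pow2_ge_0 (Rabs e - Rabs z)). nra. }
  assert (Hk1 : 0 <= k1) by (unfold k1; apply Rplus_le_le_0_compat; apply Rmult_le_pos; lra).
  assert (Hk2 : 0 <= k2) by (unfold k2; repeat apply Rmult_le_pos; lra).
  assert (HA : 0 < A) by (unfold A; lra). assert (HA' : 0 < A') by (unfold A'; lra).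
  assert (P1 : 2 * (al * e - g * z) * (- e * (z - a * e - h) - B * h + Q)
               <= 2 * A * k1 * u ^ 2 + 2 * A * u * Rabs Q).
  { assert (HRR : Rabs (- e * (z - a * e - h) - B * h + Q) <= k1 * u + Rabs Q).
    { eapply Rle_trans; [apply Rabs_triang|]. unfold u. nra. }
    pose proof (abs_prod_le _ _ _ _ Hw1 HRR). pose proof (Rabs_pos Q). nra. }
  assert (P2 : 2 * (B * z - g * e) * (- G2 * e * (z + p) * (q - z) + al * e) <= 2 * A' * k2 * u ^ 2).
  { assert (HRR : Rabs (- G2 * e * (z + p) * (q - z) + al * e) <= k2 * u) by (unfold u; nra).
    pose proof (abs_prod_le _ _ _ _ Hw2 HRR). nra. }
  assert (Young : 2 * A * u * Rabs Q <= c0 / 8 * u ^ 2 + 8 * A ^ 2 / c0 * Q ^ 2).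
  { rewrite (sqabs Q).
    assert (Hsq : 0 <= (u - 8 * A / c0 * Rabs Q) ^ 2) by apply pow2_ge_0.
    assert (Eq : (u - 8 * A / c0 * Rabs Q) ^ 2 * (c0 / 8) = c0 / 8 * u ^ 2 + 8 * A ^ 2 / c0 * Rabs Q ^ 2 - 2 * A * u * Rabs Q) by (field; lra).
    assert (Hsq2 : 0 <= (u - 8 * A / c0 * Rabs Q) ^ 2 * (c0 / 8)).
    { apply Rmult_le_pos; [exact Hsq| lra]. }
    lra. }
  assert (Split : 2 * (al * e - g * z) * (Q + (z - a * e - h) * (B - e))
    + 2 * (B * z - g * e) * (- G2 * e * (z + p) * (q - z))
    = (2 * (al * e - g * z) * (B * (z - a * e)) + 2 * (B * z - g * e) * (- al * e))
      + 2 * (al * e - g * z) * (- e * (z - a * e - h) - B * h + Q)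
      + 2 * (B * z - g * e) * (- G2 * e * (z + p) * (q - z) + al * e)) by ring.
  rewrite Split.
  assert (Hsm : 4 * A * k1 + 4 * A' * k2 <= c0 / 4) by (unfold A, A', k1, k2, al in *; lra).
  assert (HE : 0 <= e ^ 2 + z ^ 2) by (pose proof (pow2_ge_0 e); pose proof (pow2_ge_0 z); lra).
  assert (T1 : 2 * A * k1 * u ^ 2 + 2 * A' * k2 * u ^ 2 <= (c0 / 4) * (e ^ 2 + z ^ 2)).
  { assert (0 <= u ^ 2) by apply pow2_ge_0. nra. }
  assert (T2 : 8 * A ^ 2 / c0 * Q ^ 2 <= 8 * A ^ 2 / c0 * (5 * Mb ^ 2 * (x ^ 2 + y ^ 2))).
  { apply Rmult_le_compat_l; [| exact HQ2]. apply Rlt_le, Rdiv_lt_0_compat; nra. }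
  assert (T3 : c0 / 8 * u ^ 2 <= c0 / 4 * (e ^ 2 + z ^ 2)) by nra.
  unfold A in *. lra.
Qed.

Lemma dl_plus f g t a b : derivable_pt_lim f t a -> derivable_pt_lim g t b ->
  derivable_pt_lim (fun u => f u + g u) t (a + b).
Proof. intros; apply (derivable_pt_lim_plus f g t a b); auto. Qed.
Lemma dl_minus f g t a b : derivable_pt_lim f t a -> derivable_pt_lim g t b ->
  derivable_pt_lim (fun u => f u - g u) t (a - b).
Proof. intros; apply (derivable_pt_lim_minus f g t a b); auto. Qed.
Lemma dl_mult f g t a b : derivable_pt_lim f t a -> derivable_pt_lim g t b ->
  derivable_pt_lim (fun u => f u * g u) t (a * g t + f t * b).
Proof. intros; apply (derivable_pt_lim_mult f g t a b); auto. Qed.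
Lemma dl_const c t : derivable_pt_lim (fun _ => c) t 0.
Proof. apply derivable_pt_lim_const. Qed.
Lemma dl_scal c f t a : derivable_pt_lim f t a -> derivable_pt_lim (fun u => c * f u) t (c * a).
Proof.
  intros H. replace (c * a) with (0 * f t + c * a) by ring.
  apply (dl_mult (fun _ => c) f t 0 a); [apply dl_const| exact H].
Qed.
Lemma dl_eq f t l l' : derivable_pt_lim f t l -> l = l' -> derivable_pt_lim f t l'.
Proof. intros H <-; exact H. Qed.

Lemma sat_in Dmin Dmax v : Dmin <= v <= Dmax -> sat Dmin Dmax v = v.
Proof.
  intros [H1 H2]. unfold sat.
  destruct (Rlt_dec Dmax v); [lra|]. destruct (Rlt_dec v Dmin); [lra| reflexivity].
Qed.

Lemma dist4_le a b c d s0 b10 b20 Db0 K :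
  Rabs (a - s0) <= K -> Rabs (b - b10) <= K -> Rabs (c - b20) <= K -> Rabs (d - Db0) <= K ->
  dist4 a b c d s0 b10 b20 Db0 <= K.
Proof. intros; unfold dist4; repeat apply Rmax_lub; auto. Qed.

Lemma dist4_ge a b c d s0 b10 b20 Db0 :
  Rabs (a - s0) <= dist4 a b c d s0 b10 b20 Db0 /\ Rabs (b - b10) <= dist4 a b c d s0 b10 b20 Db0 /\
  Rabs (c - b20) <= dist4 a b c d s0 b10 b20 Db0 /\ Rabs (d - Db0) <= dist4 a b c d s0 b10 b20 Db0.
Proof.
  unfold dist4.
  pose proof (Rmax_l (Rmax (Rabs (a - s0)) (Rabs (b - b10))) (Rmax (Rabs (c - b20)) (Rabs (d - Db0)))).
  pose proof (Rmax_r (Rmax (Rabs (a - s0)) (Rabs (b - b10))) (Rmax (Rabs (c - b20)) (Rabs (d - Db0)))).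
  pose proof (Rmax_l (Rabs (a - s0)) (Rabs (b - b10))). pose proof (Rmax_r (Rabs (a - s0)) (Rabs (b - b10))).
  pose proof (Rmax_l (Rabs (c - b20)) (Rabs (d - Db0))). pose proof (Rmax_r (Rabs (c - b20)) (Rabs (d - Db0))).
  repeat split; lra.
Qed.

Lemma abs_le_sq w K : 0 <= K -> w ^ 2 <= K ^ 2 -> Rabs w <= K.
Proof.
  intros HK H. apply Rsqr_incr_0_var; [| exact HK].
  unfold Rsqr. rewrite (sqabs w) in H. simpl in H. nra.
Qed.

Lemma sq_le_of_abs w K : Rabs w <= K -> w ^ 2 <= K ^ 2.
Proof. intros H. rewrite (sqabs w). apply pow_incr. split; [apply Rabs_pos| exact H]. Qed.

Lemma rc_to_cont f : rcont0 f -> continuity_pt (fun u => f (Rmax 0 u)) 0.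
Proof.
  intros H eps He. destruct (H eps He) as [d [Hd Hd']].
  exists d. split; [lra|]. intros x [_ Hx]. simpl in *. unfold R_dist in *.
  rewrite Rminus_0_r in Hx. rewrite Rmax_left with (x := 0) (y := 0) by lra.
  apply Hd'. split; [apply Rmax_l|].
  unfold Rmax. destruct (Rle_dec 0 x); [|lra]. apply Rabs_def2 in Hx. lra.
Qed.

Lemma rcont0_ext f h : (forall u, 0 <= u -> f u = h u) -> rcont0 f -> rcont0 h.
Proof.
  intros E H eps He. destruct (H eps He) as [d [Hd Hd']]. exists d. split; auto.
  intros t Ht. rewrite <- !E by lra. apply Hd'; auto.
Qed.

Lemma rcont0_mult f g : rcont0 f -> rcont0 g -> rcont0 (fun u => f u * g u).
Proof.
  intros Hf Hg.
  apply rcont0_ext with (f := fun u => f u * g (Rmax 0 u)).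
  - intros u Hu. rewrite Rmax_right by lra. reflexivity.
  - apply rcont0_mul; auto. apply rc_to_cont; auto.
Qed.

Lemma rcont0_plus f g : rcont0 f -> rcont0 g -> rcont0 (fun u => f u + g u).
Proof.
  intros Hf Hg eps He.
  destruct (Hf (eps/2) ltac:(lra)) as [d1 [Hd1 H1]].
  destruct (Hg (eps/2) ltac:(lra)) as [d2 [Hd2 H2]].
  exists (Rmin d1 d2). split; [apply Rmin_glb_lt; lra|].
  intros t Ht.
  assert (A1 : Rabs (f t - f 0) < eps / 2) by (apply H1; split; [lra| eapply Rlt_le_trans; [apply Ht| apply Rmin_l]]).
  assert (A2 : Rabs (g t - g 0) < eps / 2) by (apply H2; split; [lra| eapply Rlt_le_trans; [apply Ht| apply Rmin_r]]).
  replace (f t + g t - (f 0 + g 0)) with ((f t - f 0) + (g t - g 0)) by ring.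
  eapply Rle_lt_trans; [apply Rabs_triang| lra].
Qed.

Lemma rcont0_const c : rcont0 (fun _ => c).
Proof. intros eps He. exists 1. split; [lra|]. intros. rewrite Rminus_eq_0, Rabs_R0. lra. Qed.

Lemma rcont0_minus f g : rcont0 f -> rcont0 g -> rcont0 (fun u => f u - g u).
Proof.
  intros Hf Hg.
  apply rcont0_ext with (f := fun u => f u + (-1) * g u); [intros; ring|].
  apply rcont0_plus; auto. apply rcont0_mult; auto. apply rcont0_const.
Qed.

Lemma Ubounds al B g M Amin e z x y : 0 < al -> 0 < B -> 0 < g -> Amin = Rmin al B ->
  g <= al / 2 -> g <= B / 2 -> 0 <= M ->
  Amin / 2 * (e ^ 2 + z ^ 2) + M * (x ^ 2 + y ^ 2)
    <= al * (e * e) + B * (z * z) - 2 * g * (e * z) + M * (x * x + y * y) /\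
  al * (e * e) + B * (z * z) - 2 * g * (e * z) + M * (x * x + y * y)
    <= (al + B + g) * (e ^ 2 + z ^ 2) + M * (x ^ 2 + y ^ 2).
Proof.
  intros Hal HB Hg HA Hg1 Hg2 HM.
  assert (H1 : Amin <= al) by (rewrite HA; apply Rmin_l).
  assert (H2 : Amin <= B) by (rewrite HA; apply Rmin_r).
  assert (H3 : g <= Amin / 2) by (rewrite HA; unfold Rmin; destruct (Rle_dec al B); lra).
  pose proof (pow2_ge_0 (e - z)). pose proof (pow2_ge_0 (e + z)).
  pose proof (pow2_ge_0 e). pose proof (pow2_ge_0 z).
  assert (2 * g * (e * z) <= g * (e ^ 2 + z ^ 2)) by nra.
  assert (- (2 * g * (e * z)) <= g * (e ^ 2 + z ^ 2)) by nra.
  split; nra.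
Qed.

Lemma dl_opp f t a : derivable_pt_lim f t a -> derivable_pt_lim (fun u => - f u) t (- a).
Proof. intros; apply (derivable_pt_lim_opp f t a); auto. Qed.

Lemma rcont0_opp f : rcont0 f -> rcont0 (fun u => - f u).
Proof.
  intros Hf. apply rcont0_ext with (f := fun u => (-1) * f u); [intros; ring|].
  apply rcont0_mult; auto. apply rcont0_const.
Qed.

Lemma abs_le_inv x r : Rabs x <= r -> - r <= x <= r.
Proof.
  intros H. pose proof (Rle_abs x). pose proof (Rle_abs (- x)). rewrite Rabs_Ropp in H1. lra.
Qed.

Lemma sq3 a b c : (a - b - c) ^ 2 <= 3 * (a ^ 2 + b ^ 2 + c ^ 2).
Proof. pose proof (pow2_ge_0 (a + b)). pose proof (pow2_ge_0 (a + c)). pose proof (pow2_ge_0 (b - c)). nra. Qed.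

Lemma conv_tail C lam eps t : 0 <= C -> 0 < lam -> 0 < eps -> C / (lam * eps) <= t ->
  C * exp (- lam * t) < eps.
Proof.
  intros HC Hl He Ht.
  assert (HT0 : 0 <= C / (lam * eps)) by (apply Rmult_le_pos; [lra| apply Rlt_le, Rinv_0_lt_compat; nra]).
  set (x := lam * t).
  assert (Hx0 : 0 <= x) by (unfold x; nra).
  assert (Hex : exp (- lam * t) * (1 + x) <= 1).
  { pose proof (exp_ineq1_le x). replace (- lam * t) with (- x) by (unfold x; ring).
    pose proof (exp_pos (- x)).
    assert (exp (- x) * exp x = 1) by (rewrite <- exp_plus; replace (- x + x) with 0 by ring; apply exp_0).
    nra. }
  assert (Hkx : C <= eps * x).
  { unfold x. apply Rmult_le_compat_l with (r := lam * eps) in Ht; [|nra].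
    replace (lam * eps * (C / (lam * eps))) with C in Ht by (field; lra). nra. }
  pose proof (exp_pos (- lam * t)).
  assert (C * exp (- lam * t) * (1 + x) <= C) by nra.
  apply Rmult_lt_reg_r with (r := 1 + x); [lra|]. nra.
Qed.

Lemma HSlem Amin M cL cH al B g e z x y U :
  0 < M -> cL <= Amin / 2 -> cL <= M -> cH = al + B + g + M -> 0 <= al + B + g ->
  Amin / 2 * (e ^ 2 + z ^ 2) + M * (x ^ 2 + y ^ 2) <= U ->
  U <= (al + B + g) * (e ^ 2 + z ^ 2) + M * (x ^ 2 + y ^ 2) ->
  cL * (e ^ 2 + z ^ 2 + x ^ 2 + y ^ 2) <= U /\ U <= cH * (e ^ 2 + z ^ 2 + x ^ 2 + y ^ 2).
Proof.
  intros HM H1 H2 HcH Hs Hl Hu.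
  pose proof (pow2_ge_0 e). pose proof (pow2_ge_0 z). pose proof (pow2_ge_0 x). pose proof (pow2_ge_0 y).
  assert (A1 : cL * (e ^ 2 + z ^ 2) <= Amin / 2 * (e ^ 2 + z ^ 2)) by (apply Rmult_le_compat_r; lra).
  assert (A2 : cL * (x ^ 2 + y ^ 2) <= M * (x ^ 2 + y ^ 2)) by (apply Rmult_le_compat_r; lra).
  assert (A3 : (al + B + g) * (e ^ 2 + z ^ 2) <= cH * (e ^ 2 + z ^ 2)) by (apply Rmult_le_compat_r; lra).
  assert (A4 : M * (x ^ 2 + y ^ 2) <= cH * (x ^ 2 + y ^ 2)) by (apply Rmult_le_compat_r; lra).
  replace (cL * (e ^ 2 + z ^ 2 + x ^ 2 + y ^ 2)) with (cL * (e ^ 2 + z ^ 2) + cL * (x ^ 2 + y ^ 2)) by ring.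
  replace (cH * (e ^ 2 + z ^ 2 + x ^ 2 + y ^ 2)) with (cH * (e ^ 2 + z ^ 2) + cH * (x ^ 2 + y ^ 2)) by ring.
  split; lra.
Qed.

Lemma U0lem cH dist0 e y z X : 0 < cH -> Rabs e <= dist0 -> Rabs y <= dist0 -> Rabs z <= dist0 ->
  Rabs X <= 3 * dist0 ->
  cH * (e ^ 2 + z ^ 2 + X ^ 2 + y ^ 2) <= cH * (12 * dist0 ^ 2).
Proof.
  intros HcH H1 H2 H3 H4. apply Rmult_le_compat_l; [lra|].
  apply sq_le_of_abs in H1. apply sq_le_of_abs in H2. apply sq_le_of_abs in H3. apply sq_le_of_abs in H4.
  replace ((3 * dist0) ^ 2) with (9 * dist0 ^ 2) in H4 by ring. lra.
Qed.

Theorem proposition3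
  (mu1 mu2 dmu1 dmu2 : R -> R) (sin sbar Dmin Dmax G1 G2 : R)
  (Hsin : 0 < sin)
  (Hmu1_nonneg : forall x, 0 <= x <= sin -> 0 <= mu1 x)
  (Hmu2_nonneg : forall x, 0 <= x <= sin -> 0 <= mu2 x)
  (Hmu1_der : forall x, 0 < x < sin -> derivable_pt_lim mu1 x (dmu1 x))
  (Hmu2_der : forall x, 0 < x < sin -> derivable_pt_lim mu2 x (dmu2 x))
  (Hdmu1_cont : forall x, 0 < x < sin -> continuity_pt dmu1 x)
  (Hdmu2_cont : forall x, 0 < x < sin -> continuity_pt dmu2 x)
  (Hsbar : 0 < sbar < sin)
  (Hmu12 : mu1 sbar < mu2 sbar)
  (HDmin : 0 < Dmin) (HDmin2 : Dmin < mu2 sbar) (HDmax : mu2 sbar < Dmax)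
  (HG1 : 0 < G1) (HG2 : 0 < G2) (HG1d : G1 > - dmu2 sbar) :
  exists delta k lam, 0 < delta /\ 0 < k /\ 0 < lam /\
    forall s b1 b2 Db : R -> R,
      closed_loop_solution mu1 mu2 sin sbar Dmin Dmax G1 G2 s b1 b2 Db ->
      dist4 (s 0) (b1 0) (b2 0) (Db 0) sbar 0 (sin - sbar) (mu2 sbar) < delta ->
      (forall t, 0 <= t ->
         dist4 (s t) (b1 t) (b2 t) (Db t) sbar 0 (sin - sbar) (mu2 sbar)
         <= k * exp (- lam * t) *
            dist4 (s 0) (b1 0) (b2 0) (Db 0) sbar 0 (sin - sbar) (mu2 sbar))
      /\ (forall eps, 0 < eps -> exists T, forall t, T <= t ->
            Rabs (Db t - mu2 sbar) < eps).
Proof.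
  set (Ds := mu2 sbar). set (B := sin - sbar). set (d := dmu2 sbar).
  set (a := G1 + d). set (p := Ds - Dmin). set (q := Dmax - Ds).
  assert (HB : 0 < B) by (unfold B; lra).
  assert (Ha : 0 < a) by (unfold a, d; lra).
  assert (Hp : 0 < p) by (unfold p, Ds; lra).
  assert (Hq : 0 < q) by (unfold q, Ds; lra).
  set (al := G2 * (p * q)).
  assert (Hal : 0 < al) by (unfold al; apply Rmult_lt_0_compat; [lra| apply Rmult_lt_0_compat; lra]).
  set (g := Rmin (al * B * a / (2 * al + B * a ^ 2)) (Rmin (al / 2) (B / 2))).
  assert (Hden : 0 < 2 * al + B * a ^ 2) by (pose proof (pow2_ge_0 a); nra).
  assert (Hg0 : 0 < g).
  { unfold g. repeat apply Rmin_glb_lt; try lra. apply Rdiv_lt_0_compat; [|lra].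
    repeat apply Rmult_lt_0_compat; lra. }
  assert (Hg1 : g * (2 * al + B * a ^ 2) <= al * B * a).
  { assert (g <= al * B * a / (2 * al + B * a ^ 2)) by apply Rmin_l.
    apply Rmult_le_compat_r with (r := 2 * al + B * a ^ 2) in H; [|lra].
    replace (al * B * a / (2 * al + B * a ^ 2) * (2 * al + B * a ^ 2)) with (al * B * a) in H by (field; lra).
    exact H. }
  assert (Hg2 : g <= al / 2) by (unfold g; eapply Rle_trans; [apply Rmin_r| apply Rmin_l]).
  assert (Hg3 : g <= B / 2) by (unfold g; eapply Rle_trans; [apply Rmin_r| apply Rmin_r]).
  set (c0 := Rmin (al * B * a) (g * B)).
  assert (Hc0 : 0 < c0) by (unfold c0; apply Rmin_glb_lt; repeat apply Rmult_lt_0_compat; lra).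
  assert (Hc01 : c0 <= al * B * a) by apply Rmin_l.
  assert (Hc02 : c0 <= g * B) by apply Rmin_r.
  set (A := al + g). set (A' := B + g).
  assert (HA : 0 < A) by (unfold A; lra). assert (HA' : 0 < A') by (unfold A'; lra).
  set (eta := c0 / (32 * A * B)).
  assert (Heta : 0 < eta) by (unfold eta; apply Rdiv_lt_0_compat; [lra| repeat apply Rmult_lt_0_compat; lra]).
  set (L := 4 * A * (1 + a + eta) + 4 * A' * G2 * (Rabs (q - p) + 1)).
  assert (HL : 0 < L) by (unfold L; pose proof (Rabs_pos (q - p));
     apply Rplus_lt_0_compat; repeat apply Rmult_lt_0_compat; lra).
  set (cm := (Ds - mu1 sbar) / 2).
  assert (Hcm : 0 < cm) by (unfold cm, Ds; lra).
  assert (Hc1 : continuity_pt mu1 sbar).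
  { apply derivable_continuous_pt. exists (dmu1 sbar). apply Hmu1_der; lra. }
  assert (Hc2 : continuity_pt mu2 sbar).
  { apply derivable_continuous_pt. exists (dmu2 sbar). apply Hmu2_der; lra. }
  destruct (cont_eps mu1 sbar Hc1 (cm / 2) ltac:(lra)) as [d1 [Hd1 Hd1']].
  destruct (cont_eps mu2 sbar Hc2 1 ltac:(lra)) as [d3 [Hd3 Hd3']].
  destruct (Hmu2_der sbar ltac:(lra) eta Heta) as [[d2 Hd2] Hd2'].
  simpl in Hd2'.
  set (Mb := Rabs (mu1 sbar) + Rabs Ds + cm + 1).
  assert (HMb : 0 < Mb) by (unfold Mb; pose proof (Rabs_pos (mu1 sbar)); pose proof (Rabs_pos Ds); lra).
  set (rho := Rmin (Rmin (Rmin 1 (c0 / (8 * L))) (Rmin (d1 / 2) (d2 / 2)))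
                   (Rmin (Rmin (d3 / 2) (cm / (2 * (1 + G1)))) (Rmin (p / (2 * (1 + G1))) (q / (2 * (1 + G1)))))).
  assert (Hrho0 : 0 < rho).
  { unfold rho. repeat apply Rmin_glb_lt; try lra; apply Rdiv_lt_0_compat; lra. }
  assert (Hr1 : rho <= 1) by (unfold rho; eapply Rle_trans; [apply Rmin_l|]; eapply Rle_trans; [apply Rmin_l|]; apply Rmin_l).
  assert (Hr2 : rho <= c0 / (8 * L)) by (unfold rho; eapply Rle_trans; [apply Rmin_l|]; eapply Rle_trans; [apply Rmin_l|]; apply Rmin_r).
  assert (Hr3 : rho <= d1 / 2) by (unfold rho; eapply Rle_trans; [apply Rmin_l|]; eapply Rle_trans; [apply Rmin_r|]; apply Rmin_l).
  assert (Hr4 : rho <= d2 / 2) by (unfold rho; eapply Rle_trans; [apply Rmin_l|]; eapply Rle_trans; [apply Rmin_r|]; apply Rmin_r).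
  assert (Hr5 : rho <= d3 / 2) by (unfold rho; eapply Rle_trans; [apply Rmin_r|]; eapply Rle_trans; [apply Rmin_l|]; apply Rmin_l).
  assert (Hr6 : rho <= cm / (2 * (1 + G1))) by (unfold rho; eapply Rle_trans; [apply Rmin_r|]; eapply Rle_trans; [apply Rmin_l|]; apply Rmin_r).
  assert (Hr7 : rho <= p / (2 * (1 + G1))) by (unfold rho; eapply Rle_trans; [apply Rmin_r|]; eapply Rle_trans; [apply Rmin_r|]; apply Rmin_l).
  assert (Hr8 : rho <= q / (2 * (1 + G1))) by (unfold rho; eapply Rle_trans; [apply Rmin_r|]; eapply Rle_trans; [apply Rmin_r|]; apply Rmin_r).
  assert (Hr6' : rho * (1 + G1) <= cm / 2).
  { apply Rmult_le_compat_r with (r := 1 + G1) in Hr6; [|lra].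
    replace (cm / (2 * (1 + G1)) * (1 + G1)) with (cm / 2) in Hr6 by (field; lra). exact Hr6. }
  assert (Hr7' : rho * (1 + G1) <= p / 2).
  { apply Rmult_le_compat_r with (r := 1 + G1) in Hr7; [|lra].
    replace (p / (2 * (1 + G1)) * (1 + G1)) with (p / 2) in Hr7 by (field; lra). exact Hr7. }
  assert (Hr8' : rho * (1 + G1) <= q / 2).
  { apply Rmult_le_compat_r with (r := 1 + G1) in Hr8; [|lra].
    replace (q / (2 * (1 + G1)) * (1 + G1)) with (q / 2) in Hr8 by (field; lra). exact Hr8. }
  assert (Hsmall : 4 * (G2 * (p * q) + g) * (rho * (1 + a + eta) + B * eta)
     + 4 * (B + g) * (G2 * (Rabs (q - p) + rho) * rho) <= c0 / 4).
  { fold al. fold A. fold A'.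
    assert (E1 : 4 * A * (B * eta) = c0 / 8) by (unfold eta; field; lra).
    assert (E2 : rho * L <= c0 / 8).
    { apply Rmult_le_compat_r with (r := 8 * L) in Hr2; [|lra].
      replace (c0 / (8 * L) * (8 * L)) with c0 in Hr2 by (field; lra). lra. }
    assert (E3 : 4 * A' * (G2 * (Rabs (q - p) + rho) * rho) <= rho * (4 * A' * G2 * (Rabs (q - p) + 1))).
    { pose proof (Rabs_pos (q - p)).
      assert (G2 * (Rabs (q - p) + rho) <= G2 * (Rabs (q - p) + 1)) by (apply Rmult_le_compat_l; lra).
      assert (G2 * (Rabs (q - p) + rho) * rho <= G2 * (Rabs (q - p) + 1) * rho) by (apply Rmult_le_compat_r; lra).
      nra. }
    unfold L in E2. nra. }
  set (cxy := Rmin Dmin cm).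
  assert (Hcxy : 0 < cxy) by (unfold cxy; apply Rmin_glb_lt; lra).
  set (Cq := 8 * A ^ 2 / c0 * (5 * Mb ^ 2)).
  assert (HCq : 0 <= Cq).
  { unfold Cq. apply Rmult_le_pos; [apply Rlt_le, Rdiv_lt_0_compat; [pose proof (pow2_ge_0 A); nra| lra]|].
    pose proof (pow2_ge_0 Mb); lra. }
  set (M := Cq / cxy + 1).
  assert (HM : 0 < M) by (unfold M; assert (0 <= Cq / cxy) by (apply Rmult_le_pos; [lra| apply Rlt_le, Rinv_0_lt_compat; lra]); lra).
  assert (HMc : Cq <= M * cxy) by (unfold M; field_simplify; lra).
  set (lam0 := Rmin ((c0 / 2) / (al + B + g)) cxy).
  assert (Hlam0 : 0 < lam0) by (unfold lam0; apply Rmin_glb_lt; [apply Rdiv_lt_0_compat|]; lra).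
  assert (Hlam1 : lam0 * (al + B + g) <= c0 / 2).
  { assert (lam0 <= (c0 / 2) / (al + B + g)) by apply Rmin_l.
    apply Rmult_le_compat_r with (r := al + B + g) in H; [|lra].
    replace (c0 / 2 / (al + B + g) * (al + B + g)) with (c0 / 2) in H by (field; lra). exact H. }
  assert (Hlam2 : lam0 <= cxy) by apply Rmin_r.
  set (Amin := Rmin al B).
  assert (HAmin : 0 < Amin) by (unfold Amin; apply Rmin_glb_lt; lra).
  set (th := Amin / 2 * rho ^ 2).
  assert (Hth : 0 < th) by (unfold th; pose proof (pow_lt rho 2 Hrho0); nra).
  set (cL := Rmin (Amin / 2) M).
  assert (HcL : 0 < cL) by (unfold cL; apply Rmin_glb_lt; lra).
  set (cH := al + B + g + M).
  assert (HcH : 0 < cH) by (unfold cH; lra).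
  set (delta := Rmin 1 (th / (12 * cH))).
  assert (Hdelta : 0 < delta) by (unfold delta; apply Rmin_glb_lt; [lra| apply Rdiv_lt_0_compat; lra]).
  set (k := sqrt (36 * cH / cL)).
  assert (Hk : 0 < k) by (unfold k; apply sqrt_lt_R0; apply Rdiv_lt_0_compat; lra).
  exists delta, k, (lam0 / 2).
  split; [exact Hdelta|]. split; [exact Hk|]. split; [lra|].
  intros s b1 b2 Db Hsol Hdist0.
  destruct Hsol as [Hode [Hs0 [Hb10 [Hb20 HDb0]]]].
  pose (Dsat := fun u => sat Dmin Dmax (Db u - G1 * (s u - sbar))).
  pose (ds := fun u => - mu1 (s u) * b1 u - mu2 (s u) * b2 u + Dsat u * (sin - s u)).
  pose (db1 := fun u => mu1 (s u) * b1 u - Dsat u * b1 u).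
  pose (db2 := fun u => mu2 (s u) * b2 u - Dsat u * b2 u).
  pose (dDb := fun u => - G2 * (s u - sbar) * (Db u - Dmin) * (Dmax - Db u)).
  assert (Hds : forall t, 0 < t -> derivable_pt_lim s t (ds t)) by (intros t Ht; exact (proj1 (Hode t Ht))).
  assert (Hdb1 : forall t, 0 < t -> derivable_pt_lim b1 t (db1 t)) by (intros t Ht; exact (proj1 (proj2 (Hode t Ht)))).
  assert (Hdb2 : forall t, 0 < t -> derivable_pt_lim b2 t (db2 t)) by (intros t Ht; exact (proj1 (proj2 (proj2 (Hode t Ht))))).
  assert (HdDb : forall t, 0 < t -> derivable_pt_lim Db t (dDb t)) by (intros t Ht; exact (proj2 (proj2 (proj2 (Hode t Ht))))).
  pose (U := fun u => al * ((s u - sbar) * (s u - sbar)) + B * ((Db u - Ds) * (Db u - Ds))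
     - 2 * g * ((s u - sbar) * (Db u - Ds))
     + M * ((s u + b1 u + b2 u - sin) * (s u + b1 u + b2 u - sin) + b1 u * b1 u)).
  pose (U' := fun u => 2 * (al * (s u - sbar) - g * (Db u - Ds)) * ds u
     + 2 * (B * (Db u - Ds) - g * (s u - sbar)) * dDb u
     + 2 * M * ((s u + b1 u + b2 u - sin) * (ds u + db1 u + db2 u) + b1 u * db1 u)).
  assert (HUd : forall t, 0 < t -> derivable_pt_lim U t (U' t)).
  { intros t Ht. pose proof (Hds t Ht). pose proof (Hdb1 t Ht). pose proof (Hdb2 t Ht). pose proof (HdDb t Ht).
    eapply dl_eq.
    - unfold U. repeat first [ apply dl_const | eassumption | apply dl_minus | apply dl_plus | apply dl_opp | apply dl_mult ].
    - unfold U'. ring. }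
  assert (HU0 : rcont0 U).
  { unfold U. repeat first [ apply rcont0_const | eassumption | apply rcont0_minus | apply rcont0_plus | apply rcont0_opp | apply rcont0_mult ]. }
  assert (Hcore : forall t, 0 < t -> U t < th -> U' t <= - lam0 * U t).
  { intros t Ht HUt.
    destruct (Ubounds al B g M Amin (s t - sbar) (Db t - Ds) (s t + b1 t + b2 t - sin) (b1 t)
               Hal HB Hg0 eq_refl Hg2 Hg3 (Rlt_le _ _ HM)) as [Ul Uu].
    change (U t) with (al * ((s t - sbar) * (s t - sbar)) + B * ((Db t - Ds) * (Db t - Ds))
     - 2 * g * ((s t - sbar) * (Db t - Ds))
     + M * ((s t + b1 t + b2 t - sin) * (s t + b1 t + b2 t - sin) + b1 t * b1 t)) in HUt |- *.
    assert (HS2 : 0 <= (s t + b1 t + b2 t - sin) ^ 2 + b1 t ^ 2)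
      by (pose proof (pow2_ge_0 (s t + b1 t + b2 t - sin)); pose proof (pow2_ge_0 (b1 t)); lra).
    assert (HN : (s t - sbar) ^ 2 + (Db t - Ds) ^ 2 < rho ^ 2).
    { unfold th in HUt. assert (0 <= M * ((s t + b1 t + b2 t - sin) ^ 2 + b1 t ^ 2)) by (apply Rmult_le_pos; lra).
      assert (Amin / 2 * ((s t - sbar) ^ 2 + (Db t - Ds) ^ 2) < Amin / 2 * rho ^ 2) by lra.
      apply Rmult_lt_reg_l with (r := Amin / 2); lra. }
    assert (He : Rabs (s t - sbar) <= rho).
    { apply abs_le_sq; [lra|]. pose proof (pow2_ge_0 (Db t - Ds)). lra. }
    assert (Hz : Rabs (Db t - Ds) <= rho).
    { apply abs_le_sq; [lra|]. pose proof (pow2_ge_0 (s t - sbar)). lra. }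
    assert (Hm1 : Rabs (mu1 (s t) - mu1 sbar) < cm / 2) by (apply Hd1'; lra).
    assert (Hm2 : Rabs (mu2 (s t) - mu2 sbar) < 1) by (apply Hd3'; lra).
    assert (Hh : Rabs (mu2 (s t) - Ds - d * (s t - sbar)) <= eta * Rabs (s t - sbar)).
    { destruct (Req_dec (s t - sbar) 0) as [Z|Z].
      - assert (s t = sbar) by lra. rewrite H. unfold Ds.
        replace (mu2 sbar - mu2 sbar - d * (sbar - sbar)) with 0 by ring. rewrite Rabs_R0.
        replace (sbar - sbar) with 0 by ring. rewrite Rabs_R0. lra.
      - assert (Hlt : Rabs (s t - sbar) < d2) by lra.
        pose proof (Hd2' (s t - sbar) Z Hlt) as HH.
        replace (sbar + (s t - sbar)) with (s t) in HH by ring.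
        replace (mu2 (s t) - Ds - d * (s t - sbar)) with ((s t - sbar) * ((mu2 (s t) - mu2 sbar) / (s t - sbar) - dmu2 sbar))
          by (unfold Ds, d; field; exact Z).
        rewrite Rabs_mult. rewrite Rmult_comm. apply Rmult_le_compat_r; [apply Rabs_pos| lra]. }
    assert (HMb1 : Rabs (mu1 (s t)) <= Mb).
    { unfold Mb. replace (mu1 (s t)) with ((mu1 (s t) - mu1 sbar) + mu1 sbar) by ring.
      eapply Rle_trans; [apply Rabs_triang|]. pose proof (Rabs_pos Ds). lra. }
    assert (HMb2 : Rabs (mu2 (s t)) <= Mb).
    { unfold Mb. replace (mu2 (s t)) with ((mu2 (s t) - Ds) + Ds) by ring.
      eapply Rle_trans; [apply Rabs_triang|]. pose proof (Rabs_pos (mu1 sbar)). unfold Ds in *. lra. }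
    (* saturation inactive *)
    assert (Hzg : Rabs (Db t - Ds - G1 * (s t - sbar)) <= rho * (1 + G1)).
    { eapply Rle_trans; [apply abs_sub_le|]. rewrite Rabs_mult, (Rabs_right G1) by lra.
      assert (G1 * Rabs (s t - sbar) <= G1 * rho) by (apply Rmult_le_compat_l; lra). lra. }
    apply abs_le_inv in Hzg.
    assert (HD : Dsat t = Db t - G1 * (s t - sbar)).
    { unfold Dsat. apply sat_in. unfold p, q in *. lra. }
    pose proof (key_ez B a G2 p q g c0 eta rho Mb (s t - sbar) (Db t - Ds) (s t + b1 t + b2 t - sin) (b1 t)
      (mu1 (s t)) (mu2 (s t)) (mu2 (s t) - Ds - d * (s t - sbar)) HB Ha HG2 Hp Hq Hg0 Hg1 Hc0 Hc01 Hc02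
      (Rlt_le _ _ Heta) (Rlt_le _ _ Hrho0) (Rlt_le _ _ HMb) Hh He Hz HMb1 HMb2 Hsmall) as Kez.
    assert (Eds : ds t = - mu1 (s t) * b1 t - mu2 (s t) * ((s t + b1 t + b2 t - sin) - b1 t)
       + ((Db t - Ds) - a * (s t - sbar) - (mu2 (s t) - Ds - d * (s t - sbar))) * (B - (s t - sbar))).
    { unfold ds. rewrite HD. unfold a, B. ring. }
    assert (EdDb : dDb t = - G2 * (s t - sbar) * ((Db t - Ds) + p) * (q - (Db t - Ds))).
    { unfold dDb, p, q. ring. }
    assert (Exy : ds t + db1 t + db2 t = - Dsat t * (s t + b1 t + b2 t - sin)).
    { unfold ds, db1, db2. ring. }
    assert (Ey : db1 t = (mu1 (s t) - Dsat t) * b1 t) by (unfold db1; ring).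
    assert (HDlo : cxy <= Dsat t).
    { rewrite HD. assert (cxy <= Dmin) by apply Rmin_l. unfold p in *. lra. }
    assert (HDm1 : cxy <= Dsat t - mu1 (s t)).
    { rewrite HD. assert (cxy <= cm) by apply Rmin_r. apply Rlt_le, abs_le_inv in Hm1.
      assert (Hcmd : Ds - mu1 sbar = 2 * cm) by (unfold cm; field). lra. }
    set (X := s t + b1 t + b2 t - sin) in *.
    set (Y := b1 t) in *.
    set (e := s t - sbar) in *. set (z := Db t - Ds) in *.
    assert (Hxy : 2 * M * (X * (ds t + db1 t + db2 t) + Y * db1 t) <= - 2 * M * cxy * (X ^ 2 + Y ^ 2)).
    { rewrite Exy, Ey.
      pose proof (pow2_ge_0 X). pose proof (pow2_ge_0 Y).
      assert (cxy * X ^ 2 <= Dsat t * X ^ 2) by (apply Rmult_le_compat_r; lra).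
      assert (cxy * Y ^ 2 <= (Dsat t - mu1 (s t)) * Y ^ 2) by (apply Rmult_le_compat_r; lra).
      assert (QQ : cxy * (X ^ 2 + Y ^ 2) <= Dsat t * X ^ 2 + (Dsat t - mu1 (s t)) * Y ^ 2) by lra.
      apply Rmult_le_compat_l with (r := 2 * M) in QQ; [|lra].
      replace (2 * M * (X * (- Dsat t * X) + Y * ((mu1 (s t) - Dsat t) * Y)))
        with (- (2 * M * (Dsat t * X ^ 2 + (Dsat t - mu1 (s t)) * Y ^ 2))) by ring.
      replace (- 2 * M * cxy * (X ^ 2 + Y ^ 2)) with (- (2 * M * (cxy * (X ^ 2 + Y ^ 2)))) by ring.
      lra. }
    assert (EU' : U' t = 2 * (al * e - g * z) * ds t + 2 * (B * z - g * e) * dDb t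
               + 2 * M * (X * (ds t + db1 t + db2 t) + Y * db1 t)) by reflexivity.
    rewrite EU'. rewrite <- Eds, <- EdDb in Kez. fold al in Kez. fold Cq A in Kez.
    assert (HN0 : 0 <= e ^ 2 + z ^ 2) by (pose proof (pow2_ge_0 e); pose proof (pow2_ge_0 z); lra).
    assert (P1 : lam0 * ((al + B + g) * (e ^ 2 + z ^ 2)) <= c0 / 2 * (e ^ 2 + z ^ 2)).
    { rewrite <- Rmult_assoc. apply Rmult_le_compat_r; lra. }
    assert (P2 : lam0 * (M * (X ^ 2 + Y ^ 2)) <= M * cxy * (X ^ 2 + Y ^ 2)).
    { replace (lam0 * (M * (X ^ 2 + Y ^ 2))) with (M * lam0 * (X ^ 2 + Y ^ 2)) by ring.
      apply Rmult_le_compat_r; [lra|]. apply Rmult_le_compat_l; lra. }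
    assert (P3 : Cq * (X ^ 2 + Y ^ 2) <= M * cxy * (X ^ 2 + Y ^ 2)) by (apply Rmult_le_compat_r; lra).
    assert (P4 : lam0 * (al * (e * e) + B * (z * z) - 2 * g * (e * z) + M * (X * X + Y * Y))
              <= lam0 * ((al + B + g) * (e ^ 2 + z ^ 2) + M * (X ^ 2 + Y ^ 2)))
      by (apply Rmult_le_compat_l; lra).
    assert (ECq : 8 * A ^ 2 / c0 * (5 * Mb ^ 2) = Cq) by reflexivity. rewrite ECq in Kez.
    rewrite Rmult_plus_distr_l in P4.
    replace (- lam0 * (al * (e * e) + B * (z * z) - 2 * g * (e * z) + M * (X * X + Y * Y)))
      with (- (lam0 * (al * (e * e) + B * (z * z) - 2 * g * (e * z) + M * (X * X + Y * Y)))) by ring.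
    lra. }
  set (dist0 := dist4 (s 0) (b1 0) (b2 0) (Db 0) sbar 0 B Ds) in *.
  destruct (dist4_ge (s 0) (b1 0) (b2 0) (Db 0) sbar 0 B Ds) as [D1 [D2 [D3 D4]]]. fold dist0 in D1, D2, D3, D4.
  rewrite Rminus_0_r in D2.
  assert (Hd0 : 0 <= dist0) by (pose proof (Rabs_pos (s 0 - sbar)); lra).
  assert (HS : forall u, cL * ((s u - sbar) ^ 2 + (Db u - Ds) ^ 2 + (s u + b1 u + b2 u - sin) ^ 2 + b1 u ^ 2) <= U u
     /\ U u <= cH * ((s u - sbar) ^ 2 + (Db u - Ds) ^ 2 + (s u + b1 u + b2 u - sin) ^ 2 + b1 u ^ 2)).
  { intros u.
    destruct (Ubounds al B g M Amin (s u - sbar) (Db u - Ds) (s u + b1 u + b2 u - sin) (b1 u)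
               Hal HB Hg0 eq_refl Hg2 Hg3 (Rlt_le _ _ HM)) as [Ul Uu].
    change (U u) with (al * ((s u - sbar) * (s u - sbar)) + B * ((Db u - Ds) * (Db u - Ds))
     - 2 * g * ((s u - sbar) * (Db u - Ds))
     + M * ((s u + b1 u + b2 u - sin) * (s u + b1 u + b2 u - sin) + b1 u * b1 u)).
    pose proof (pow2_ge_0 (s u - sbar)). pose proof (pow2_ge_0 (Db u - Ds)).
    pose proof (pow2_ge_0 (s u + b1 u + b2 u - sin)). pose proof (pow2_ge_0 (b1 u)).
    assert (cL <= Amin / 2) by apply Rmin_l. assert (cL <= M) by apply Rmin_r.
    apply (HSlem Amin M cL cH al B g); [lra|assumption|assumption|reflexivity|lra|exact Ul|exact Uu]. }
  assert (HU0pos : 0 <= U 0).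
  { destruct (HS 0) as [H _]. pose proof (pow2_ge_0 (s 0 - sbar)). pose proof (pow2_ge_0 (Db 0 - Ds)).
    pose proof (pow2_ge_0 (s 0 + b1 0 + b2 0 - sin)). pose proof (pow2_ge_0 (b1 0)).
    eapply Rle_trans; [| exact H]. apply Rmult_le_pos; lra. }
  assert (HU0le : U 0 <= cH * (12 * dist0 ^ 2)).
  { destruct (HS 0) as [_ H]. eapply Rle_trans; [exact H|].
    assert (HX : Rabs (s 0 + b1 0 + b2 0 - sin) <= 3 * dist0).
    { replace (s 0 + b1 0 + b2 0 - sin) with ((s 0 - sbar) + b1 0 + (b2 0 - B)) by (unfold B; ring).
      eapply Rle_trans; [apply Rabs_triang|]. eapply Rle_trans; [apply Rplus_le_compat_r, Rabs_triang|]. lra. }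
    apply U0lem; assumption. }
  assert (HU0th : U 0 < th).
  { assert (dist0 < th / (12 * cH)) by (eapply Rlt_le_trans; [exact Hdist0| apply Rmin_r]).
    assert (dist0 < 1) by (eapply Rlt_le_trans; [exact Hdist0| apply Rmin_l]).
    assert (dist0 * dist0 <= dist0 * 1) by (apply Rmult_le_compat_l; lra).
    assert (HdD2 : cH * (12 * dist0 ^ 2) <= 12 * cH * dist0).
    { replace (cH * (12 * dist0 ^ 2)) with (12 * cH * (dist0 * dist0)) by ring.
      apply Rmult_le_compat_l; lra. }
    assert (12 * cH * dist0 < th).
    { apply Rmult_lt_compat_l with (r := 12 * cH) in H; [|lra].
      replace (12 * cH * (th / (12 * cH))) with th in H by (field; lra). exact H. }
    lra. }
  pose proof (bootstrap U U' lam0 th (Rlt_le _ _ Hlam0) HU0pos HU0th HUd HU0 Hcore) as Hdecay.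
  assert (Hk2 : k ^ 2 = 36 * cH / cL).
  { unfold k. simpl. rewrite Rmult_1_r. apply sqrt_sqrt. apply Rlt_le, Rdiv_lt_0_compat; lra. }
  assert (Hbound : forall t, 0 <= t ->
     3 * ((s t - sbar) ^ 2 + (Db t - Ds) ^ 2 + (s t + b1 t + b2 t - sin) ^ 2 + b1 t ^ 2)
       <= (k * exp (- (lam0 / 2) * t) * dist0) ^ 2).
  { intros t Ht. destruct (HS t) as [Hl _]. pose proof (Hdecay t Ht) as Hdt.
    assert (Eexp : exp (- (lam0 / 2) * t) ^ 2 = exp (- lam0 * t)).
    { simpl. rewrite Rmult_1_r, <- exp_plus. f_equal. field. }
    replace ((k * exp (- (lam0 / 2) * t) * dist0) ^ 2) with (k ^ 2 * exp (- (lam0 / 2) * t) ^ 2 * dist0 ^ 2) by ring.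
    rewrite Hk2, Eexp.
    pose proof (exp_pos (- lam0 * t)).
    assert (U 0 * exp (- lam0 * t) <= cH * (12 * dist0 ^ 2) * exp (- lam0 * t)) by (apply Rmult_le_compat_r; lra).
    set (SS := (s t - sbar) ^ 2 + (Db t - Ds) ^ 2 + (s t + b1 t + b2 t - sin) ^ 2 + b1 t ^ 2) in *.
    assert (cL * SS <= cH * (12 * dist0 ^ 2) * exp (- lam0 * t)) by lra.
    replace (36 * cH / cL * exp (- lam0 * t) * dist0 ^ 2) with (3 * ((cH * (12 * dist0 ^ 2) * exp (- lam0 * t)) / cL)) by (field; lra).
    apply Rmult_le_compat_l; [lra|].
    apply Rmult_le_reg_l with (r := cL); [lra|].
    replace (cL * (cH * (12 * dist0 ^ 2) * exp (- lam0 * t) / cL)) with (cH * (12 * dist0 ^ 2) * exp (- lam0 * t)) by (field; lra).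
    exact H1. }
  assert (HK0 : forall t, 0 <= k * exp (- (lam0 / 2) * t) * dist0).
  { intros t. pose proof (exp_pos (- (lam0 / 2) * t)). apply Rmult_le_pos; [|lra]. apply Rmult_le_pos; lra. }
  split.
  - intros t Ht. pose proof (Hbound t Ht) as Hb.
    pose proof (pow2_ge_0 (s t - sbar)). pose proof (pow2_ge_0 (Db t - Ds)).
    pose proof (pow2_ge_0 (s t + b1 t + b2 t - sin)). pose proof (pow2_ge_0 (b1 t)).
    apply dist4_le; apply abs_le_sq; try apply HK0.
    + lra.
    + rewrite Rminus_0_r. lra.
    + replace (b2 t - B) with ((s t + b1 t + b2 t - sin) - (s t - sbar) - b1 t) by (unfold B; ring).
      pose proof (sq3 (s t + b1 t + b2 t - sin) (s t - sbar) (b1 t)). lra.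
    + lra.
  - intros eps Heps.
    exists (k * dist0 / (lam0 / 2 * eps)).
    intros t Ht.
    assert (HT0 : 0 <= k * dist0 / (lam0 / 2 * eps)).
    { apply Rmult_le_pos; [apply Rmult_le_pos; lra| apply Rlt_le, Rinv_0_lt_compat, Rmult_lt_0_compat; lra]. }
    pose proof (Hbound t ltac:(lra)) as Hb.
    pose proof (pow2_ge_0 (s t - sbar)). pose proof (pow2_ge_0 (s t + b1 t + b2 t - sin)). pose proof (pow2_ge_0 (b1 t)). pose proof (pow2_ge_0 (Db t - Ds)).
    assert (Hz : Rabs (Db t - Ds) <= k * exp (- (lam0 / 2) * t) * dist0) by (apply abs_le_sq; [apply HK0| lra]).
    pose proof (conv_tail (k * dist0) (lam0 / 2) eps t ltac:(apply Rmult_le_pos; lra) ltac:(lra) Heps Ht).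
    replace (k * exp (- (lam0 / 2) * t) * dist0) with (k * dist0 * exp (- (lam0 / 2) * t)) in Hz by ring.
    lra.
Qed.
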